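(* In the group \(\mathcal{G}\) described below, let \(i,j,k\in\{1,\dots,14\}\) be indices whose images \(\bar i,\bar j,\bar k\) under the map \(m\mapsto m\) for \(m\le 7\), \(m\mapsto m-7\) for \(m\ge 8\), are three distinct collinear points of the Fano plane. Then there exists \(\gamma_{i,j,k}\in\mathcal{N}\) with \(\gamma_{i,j,k}=t_it_jt_kt_it_j\).
   Context: Let \(\mathcal{G}=\langle x,y,t \mid x^7, y^2, (xy)^3, [x,y]^4, t^2, [t^{x^2},yx^{-1}], [t,y], (yt^{x^2})^5, (xyx^2t^x)^5, (xt)^8\rangle\), with \(a^g=g^{-1}ag\), \([a,b]=a^{-1}b^{-1}ab\). Let \(\mathcal{N}=\langle x,y\rangle\le\mathcal{G}\); it acts on \(\{1,\dots,14\}\) on the right via \(x\mapsto(1,2,3,4,5,6,7)(8,9,10,11,12,13,14)\), \(y\mapsto(1,12)(2,3)(4,11)(5,8)(6,13)(9,10)\). Put \(t_7=t\) and \(t_i=t^g\) for any \(g\in\mathcal{N}\) mapping \(7\) to \(i\). The Fano plane has points \(1,\dots,7\) and lines \(\{7,1,5\},\{1,2,6\},\{2,3,7\},\{3,4,1\},\{4,5,2\},\{5,6,3\},\{6,7,4\}\); the point \(m\) and the index \(m+7\) lie over the same point. *)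

(* Defs.v *)
From mathcomp Require Import all_boot.
Set Implicit Arguments. Unset Strict Implicit. Unset Printing Implicit Defensive.

Record group := Group {
  carrier :> Type;
  gmul : carrier -> carrier -> carrier;
  ginv : carrier -> carrier;
  gone : carrier;
  gmulA : forall a b c, gmul a (gmul b c) = gmul (gmul a b) c;
  gmul1 : forall a, gmul gone a = a;
  gmulV : forall a, gmul (ginv a) a = gone
}.

Section GroupOps.
Variable G : group.
Definition gexp (a : G) (n : nat) : G := iter n (gmul a) (gone G).
Definition gconj (a g : G) : G := gmul (gmul (ginv g) a) g.
Definition gcomm (a b : G) : G := gmul (gmul (gmul (ginv a) (ginv b)) a) b.

Definition G_relations (x y t : G) : Prop :=
  gexp x 7 = gone G /\ gexp y 2 = gone G /\ gexp (gmul x y) 3 = gone G /\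
  gexp (gcomm x y) 4 = gone G /\ gexp t 2 = gone G /\
  gcomm (gconj t (gexp x 2)) (gmul y (ginv x)) = gone G /\
  gcomm t y = gone G /\
  gexp (gmul y (gconj t (gexp x 2))) 5 = gone G /\
  gexp (gmul (gmul (gmul x y) (gexp x 2)) (gconj t x)) 5 = gone G /\
  gexp (gmul x t) 8 = gone G.
End GroupOps.

(* Words in the generators x, y of N: a letter is (is_x, inverted).
   (true,b) = x^{+-1}, (false,b) = y^{+-1}; read left to right. *)
Definition letter := (bool * bool)%type.
Definition word := seq letter.

Definition eval_letter (G : group) (x y : G) (l : letter) : G :=
  let g := if l.1 then x else y in if l.2 then ginv g else g.
Definition eval_word (G : group) (x y : G) (w : word) : G :=
  foldl (fun acc l => gmul acc (eval_letter x y l)) (gone G) w.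

(* The permutation action of N on {1,...,14} (right action). *)
Definition px (p : nat) : nat :=
  if (1 <= p <= 6)%N then p.+1 else if p == 7 then 1
  else if (8 <= p <= 13)%N then p.+1 else if p == 14 then 8 else p.
Definition px_inv (p : nat) : nat :=
  if (2 <= p <= 7)%N then p.-1 else if p == 1 then 7
  else if (9 <= p <= 14)%N then p.-1 else if p == 8 then 14 else p.
Definition py (p : nat) : nat :=
  match p with
  | 1 => 12 | 12 => 1 | 2 => 3 | 3 => 2 | 4 => 11 | 11 => 4
  | 5 => 8 | 8 => 5 | 6 => 13 | 13 => 6 | 9 => 10 | 10 => 9
  | _ => p end.
Definition act_letter (p : nat) (l : letter) : nat :=
  if l.1 then (if l.2 then px_inv p else px p) else py p.
Definition act_word (p : nat) (w : word) : nat := foldl act_letter p w.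

(* t_i = t^g where g (a word in x,y) maps 7 to i. *)
Definition t_idx (G : group) (x y t : G) (g : word) : G :=
  gconj t (eval_word x y g).

Definition fano_lines : seq (seq nat) :=
  [:: [:: 7; 1; 5]; [:: 1; 2; 6]; [:: 2; 3; 7]; [:: 3; 4; 1];
      [:: 4; 5; 2]; [:: 5; 6; 3]; [:: 6; 7; 4]].
Definition bar (m : nat) : nat := if (m <= 7)%N then m else m - 7.
Definition fano_collinear_distinct (a b c : nat) : bool :=
  [&& a != b, b != c, a != c &
      has (fun L => [&& a \in L, b \in L & c \in L]) fano_lines].

(* Main.v *)
Set Warnings "-notation-overridden,-spurious-ssr-injection".
Require Import Defs.
From mathcomp Require Import all_boot.
From Stdlib Require Import PArith.
Set Implicit Arguments. Unset Strict Implicit. Unset Printing Implicit Defensive.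

(* Proof strategy: the group presented by the given relations is M22 and
   N = <x,y> = L2(7).  We run a (verified-by-replay) Todd-Coxeter coset
   enumeration: first of N over the trivial subgroup (168 cosets), then of
   the whole group over N (2640 cosets), where coefficients in N are tracked
   through the first table.  Every step of the enumeration is checked by a
   sound executor (exec_ok), so every table entry is a valid equation in any
   group satisfying the relations; the final identities are then read off
   the table by computation. *)

Inductive trie (A : Type) := TLeaf | TNode of trie A & option A & trie A.
Arguments TLeaf {A}.
Arguments TNode {A} _ _ _.

Fixpoint tget A (m : trie A) (k : positive) {struct k} : option A :=
  match m with
  | TLeaf => None
  | TNode l v r => match k with xH => v | xO k' => tget l k' | xI k' => tget r k' end
  end.

Definition tsplit A (m : trie A) : trie A * option A * trie A :=
  match m with TLeaf => (TLeaf, None, TLeaf) | TNode l v r => (l, v, r) end.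

Fixpoint tset A (m : trie A) (k : positive) (x : A) {struct k} : trie A :=
  match tsplit m with (l, v, r) =>
  match k with
  | xH => TNode l (Some x) r
  | xO k' => TNode (tset l k' x) v r
  | xI k' => TNode l v (tset r k' x)
  end end.

Lemma tget_leaf A k : tget (@TLeaf A) k = None.
Proof. by case: k. Qed.

Lemma tget_set A (m : trie A) k x k' y :
  tget (tset m k x) k' = Some y -> y = x \/ tget m k' = Some y.
Proof.
elim: k m k' => [k IH|k IH|] [|l v r] [k'|k'|] //=; rewrite ?tget_leaf;
  move=> H; first [ by case: H => ->; left
                  | by case/IH: H; rewrite ?tget_leaf; auto
                  | by right ].
Qed.

Definition li (c : nat) : nat := if odd c then c.-1 else c.+1.
Definition wrev (w : seq nat) : seq nat := rev (map li w).

Fixpoint dec (p : positive) : seq nat :=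
  match p with
  | xO (xO (xO q)) => rcons (dec q) 0
  | xI (xO (xO q)) => rcons (dec q) 1
  | xO (xI (xO q)) => rcons (dec q) 2
  | xI (xI (xO q)) => rcons (dec q) 3
  | xO (xO (xI q)) => rcons (dec q) 4
  | xI (xO (xI q)) => rcons (dec q) 5
  | _ => [::]
  end.

Definition push (c : nat) (p : positive) : positive :=
  match c with
  | 0 => xO (xO (xO p)) | 1 => xI (xO (xO p)) | 2 => xO (xI (xO p))
  | 3 => xI (xI (xO p)) | 4 => xO (xO (xI p)) | _ => xI (xO (xI p))
  end.

Definition omatch A B (o : option A) (f : A -> option B) : option B :=
  match o with Some a => f a | None => None end.

Section Comp.
Variables (C : Type) (cmul : C -> C -> option C) (cinv : C -> option C)
  (cone : C) (cgen : nat -> option C) (rels : seq (seq nat))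
  (rep : positive -> seq nat) (chk : bool).

Definition fact := (positive * nat * positive * C)%type.
Definition qfact := (positive * positive * C)%type.
Record st := St { sF : trie fact; sQ : trie qfact }.
Definition st0 := St TLeaf TLeaf.

Definition rawF (s : st) (c : positive) (col : nat) : option (positive * C) :=
  match tget (sF s) (push col c) with
  | Some (c', col', d, n) => if Pos.eqb c' c && (col' == col) then Some (d, n) else None
  | None => None end.
Definition rawQ (s : st) (a : positive) : option (positive * C) :=
  match tget (sQ s) a with
  | Some (a', b, n) => if Pos.eqb a' a then Some (b, n) else None
  | None => None end.

Fixpoint resolve (s : st) (fuel : nat) (d : positive) (n : C) : option (positive * C) :=
  match fuel with
  | 0 => Some (d, n)
  | S f => match rawQ s d with
           | None => Some (d, n)
           | Some (b, m) => omatch (cmul n m) (fun n' => resolve s f b n')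
           end
  end.

Definition FUEL := 64.
Definition lookF s c col := omatch (rawF s c col) (fun dn => resolve s FUEL dn.1 dn.2).
Definition lookQ s a := omatch (rawQ s a) (fun bn => resolve s FUEL bn.1 bn.2).

Fixpoint trace (s : st) (c : positive) (a : C) (w : seq nat) : option (positive * C) :=
  match w with
  | [::] => Some (c, a)
  | col :: w' => omatch (lookF s c col) (fun dn =>
                 omatch (cmul a dn.2) (fun a' => trace s dn.1 a' w'))
  end.

Definition addF (s : st) (x : fact) : st :=
  let: (c, col, d, n) := x in St (tset (sF s) (push col c) x) (sQ s).
Definition addF2 s c col d n ni := addF (addF s (c, col, d, n)) (d, li col, c, ni).
Definition addQ (s : st) a b n : st := St (sF s) (tset (sQ s) a (a, b, n)).

Inductive step :=
 | SI of positive & nat & positive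
 | SS of nat
 | SD of positive & nat & nat
 | SC of positive & nat & nat & bool
 | ST of positive & nat
 | SX of positive & nat & bool.

Definition exec (s : st) (stp : step) : option st :=
  match stp with
  | SI c col d => if ~~ chk || (rep d == rcons (rep c) col)
                then Some (addF2 s c col d cone cone) else None
  | SS col => omatch (cgen col) (fun n => omatch (cinv n) (fun ni =>
                Some (addF2 s xH col xH n ni)))
  | SD c ri i => let R := nth [::] rels ri in
      if i < size R then
      omatch (trace s c cone (take i R)) (fun fa =>
      omatch (trace s c cone (wrev (drop i.+1 R))) (fun bb =>
      omatch (cinv fa.2) (fun ai => omatch (cmul ai bb.2) (fun n =>
      omatch (cinv n) (fun ni => Some (addF2 s fa.1 (nth 0 R i) bb.1 n ni))))))
      else None
  | SC c ri i dir => let R := nth [::] rels ri in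
      omatch (trace s c cone (take i R)) (fun fa =>
      omatch (trace s c cone (wrev (drop i R))) (fun bb =>
      if dir then
        omatch (cinv fa.2) (fun ai => omatch (cmul ai bb.2) (fun n => Some (addQ s fa.1 bb.1 n)))
      else
        omatch (cinv bb.2) (fun bi => omatch (cmul bi fa.2) (fun n => Some (addQ s bb.1 fa.1 n)))))
  | ST a col =>
      omatch (lookQ s a) (fun bn => omatch (lookF s a col) (fun dm =>
      omatch (cinv bn.2) (fun ni => omatch (cmul ni dm.2) (fun k =>
      omatch (cinv k) (fun ki => Some (addF2 s bn.1 col dm.1 k ki))))))
  | SX a col dir =>
      omatch (lookQ s a) (fun bn => omatch (lookF s a col) (fun dm =>
      omatch (lookF s bn.1 col) (fun dm2 =>
      omatch (cinv dm.2) (fun mi => omatch (cmul mi bn.2) (fun k1 =>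
      omatch (cmul k1 dm2.2) (fun k =>
      if dir then Some (addQ s dm.1 dm2.1 k)
      else omatch (cinv k) (fun ki => Some (addQ s dm2.1 dm.1 ki))))))))
  end.

Definition sexec s stp := match exec s stp with Some s' => s' | None => s end.
Definition run (l : seq step) : st := foldl sexec st0 l.


(* ---------- planner (untrusted: only produces a list of steps) ---------- *)
Definition alive (s : st) c := if rawQ s c is None then true else false.

Record pst := PS { core : st; plog : seq step; pded : seq (positive * nat);
  pcq : seq positive; qf : seq positive; qb : seq positive;
  pcur : option (positive * nat); pdone : bool; pdefs : seq positive; pnext : positive }.

Definition emit ps stp := PS (sexec (core ps) stp) (stp :: plog ps) (pded ps) (pcq ps)
  (qf ps) (qb ps) (pcur ps) (pdone ps) (pdefs ps) (pnext ps).
Definition ded_push ps l := PS (core ps) (plog ps) (l ++ pded ps) (pcq ps)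
  (qf ps) (qb ps) (pcur ps) (pdone ps) (pdefs ps) (pnext ps).
Definition cq_push ps a := PS (core ps) (plog ps) (pded ps) (a :: pcq ps)
  (qf ps) (qb ps) (pcur ps) (pdone ps) (pdefs ps) (pnext ps).

Fixpoint walk (s : st) (f : positive) (w : seq nat) (i : nat) : positive * nat :=
  match w with
  | [::] => (f, i)
  | col :: w' => match lookF s f col with Some (d, _) => walk s d w' i.+1 | None => (f, i) end
  end.

Fixpoint walkl (s : st) (f : positive) (w : seq nat) (i lim : nat) : positive * nat :=
  match lim with 0 => (f, i) | S lim' =>
  match w with
  | [::] => (f, i)
  | col :: w' => match lookF s f col with Some (d, _) => walkl s d w' i.+1 lim' | None => (f, i) end
  end end.

Definition scan_rel ps c (rr : nat * seq nat * nat * seq nat) :=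
  let: (ri, R, m, wR) := rr in
  let s := core ps in
  if ~~ alive s c then ps else
  let (f, i) := walk s c R 0 in
  if i == m then
    (if Pos.eqb f c then ps else
     let dir := Pos.ltb c f in cq_push (emit ps (SC c ri m dir)) (if dir then f else c))
  else
  let lim := m - 1 - i in
  let (b, k) := walkl s c wR 0 lim in
  if k == lim then
    let g := nth 0 R i in
    match lookF s b (li g) with
    | Some (e, _) =>
        if Pos.eqb e f then ded_push (emit ps (SD c ri i)) [:: (f, g); (b, li g)]
        else let dir := Pos.ltb e f in cq_push (emit ps (SC c ri i dir)) (if dir then f else e)
    | None => ded_push (emit ps (SD c ri i)) [:: (f, g); (b, li g)]
    end
  else ps.

Variable ncol : nat.
Variable byc : seq (seq (nat * seq nat * nat * seq nat)).

Definition cq_col ps a col :=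
  let s := core ps in
  match lookF s a col with None => ps | Some (d, _) =>
  match lookQ s a with None => ps | Some (b, _) =>
  match lookF s b col with
  | None => ded_push (emit ps (ST a col)) [:: (b, col); (d, li col)]
  | Some (d2, _) =>
     if Pos.eqb d2 d then
       (if lookF s d (li col) is None then ded_push (emit ps (ST a col)) [:: (b, col); (d, li col)]
        else ps)
     else let dir := Pos.ltb d2 d in cq_push (emit ps (SX a col dir)) (if dir then d else d2)
  end end end.

Definition tick ps :=
  if pdone ps then ps else
  match pcq ps with
  | a :: rest => foldl (fun ps col => cq_col ps a col)
                   (PS (core ps) (plog ps) (pded ps) rest (qf ps) (qb ps) (pcur ps) (pdone ps) (pdefs ps) (pnext ps))
                   (iota 0 ncol)
  | [::] =>
  match pded ps with
  | (c, col) :: rest =>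
     let ps := PS (core ps) (plog ps) rest (pcq ps) (qf ps) (qb ps) (pcur ps) (pdone ps) (pdefs ps) (pnext ps) in
     if alive (core ps) c then foldl (fun ps ri => scan_rel ps c ri) ps (nth [::] byc col) else ps
  | [::] =>
  match pcur ps with
  | Some (c, col) =>
     if (col < ncol) && alive (core ps) c then
       (if lookF (core ps) c col is None then
          let d := pnext ps in
          let ps := emit ps (SI c col d) in
          PS (core ps) (plog ps) ([:: (c, col); (d, li col)] ++ pded ps) (pcq ps) (qf ps) (d :: qb ps)
             (Some (c, col.+1)) (pdone ps) (d :: pdefs ps) (Pos.succ d)
        else PS (core ps) (plog ps) (pded ps) (pcq ps) (qf ps) (qb ps) (Some (c, col.+1)) (pdone ps) (pdefs ps) (pnext ps))
     else PS (core ps) (plog ps) (pded ps) (pcq ps) (qf ps) (qb ps) None (pdone ps) (pdefs ps) (pnext ps)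
  | None =>
     match qf ps with
     | c :: rest => PS (core ps) (plog ps) (pded ps) (pcq ps) rest (qb ps) (Some (c, 0)) (pdone ps) (pdefs ps) (pnext ps)
     | [::] => match rev (qb ps) with
               | c :: rest => PS (core ps) (plog ps) (pded ps) (pcq ps) rest [::] (Some (c, 0)) (pdone ps) (pdefs ps) (pnext ps)
               | [::] => PS (core ps) (plog ps) (pded ps) (pcq ps) [::] [::] None true (pdefs ps) (pnext ps)
               end
     end
  end end end.

Definition plan (sub : seq nat) (fuel : positive) : pst :=
  let ps0 := foldl (fun ps col => ded_push (emit ps (SS col)) [:: (xH, col); (xH, li col)])
               (PS st0 [::] [::] [::] [:: xH] [::] None false [:: xH] 2%positive) sub in
  Pos.iter tick ps0 fuel.

End Comp.

Definition allrot (rels : seq (seq nat)) : seq (seq nat) :=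
  flatten [seq flatten [seq [seq rot k w | k <- iota 0 (size w)] | w <- [:: R; wrev R]] | R <- rels].
Definition mkbyc (rels : seq (seq nat)) : seq (seq (nat * seq nat * nat * seq nat)) :=
  [seq [seq (ri, nth [::] rels ri, size (nth [::] rels ri), wrev (nth [::] rels ri))
        | ri <- iota 0 (size rels) & nth 0 (nth [::] rels ri) 0 == col] | col <- iota 0 6].

Definition wpow (w : seq nat) (n : nat) : seq nat := flatten (nseq n w).
Definition wconj (a g : seq nat) := wrev g ++ a ++ g.
Definition wcomm (a b : seq nat) := wrev a ++ wrev b ++ a ++ b.
Definition X0 := [:: 0]. Definition Y0 := [:: 2]. Definition T0 := [:: 4].
Definition rels1 : seq (seq nat) :=
  [:: wpow X0 7; wpow Y0 2; wpow (X0 ++ Y0) 3; wpow (wcomm X0 Y0) 4].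
Definition rels2 : seq (seq nat) :=
  rels1 ++ [:: wpow T0 2; wcomm (wconj T0 (wpow X0 2)) (Y0 ++ wrev X0); wcomm T0 Y0;
    wpow (Y0 ++ wconj T0 (wpow X0 2)) 5;
    wpow (((X0 ++ Y0) ++ wpow X0 2) ++ wconj T0 X0) 5;
    wpow (X0 ++ T0) 8].
Definition RR1 := allrot rels1.
Definition RR2 := allrot rels2.


Fixpoint chunkaux A (k : nat) (cur : seq A) (acc : seq (seq A)) (l : seq A) : seq (seq A) :=
  match l with
  | [::] => rev (rev cur :: acc)
  | x :: l' => if k is S k' then chunkaux k' (x :: cur) acc l' else chunkaux 511 [:: x] (rev cur :: acc) l'
  end.
Definition chunk A (l : seq A) := chunkaux 512 [::] [::] l.
Definition runc C cmul cinv cone cgen rels rep (ls : seq (seq step)) : st C :=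
  foldl (fun s l => foldl (@sexec C cmul cinv cone cgen rels rep true) s l) (st0 C) ls.
Fixpoint repf (P : trie (positive * nat)) (fuel : nat) (d : positive) : seq nat :=
  match fuel with
  | 0 => [::]
  | S f => match tget P d with Some (c, col) => rcons (repf P f c) col | None => [::] end
  end.
Definition buildP (ls : seq (seq step)) : trie (positive * nat) :=
  foldl (fun m l => foldl (fun m s => if s is SI c col d then tset m d (c, col) else m) m l) TLeaf ls.

Definition uplan1 := plan (fun _ _ => Some tt) (fun _ => Some tt) tt (fun _ => None) RR1 (fun _ => [::]) false 4 (mkbyc RR1) [::] 100000.
Definition LOG1 := Eval vm_compute in chunk (rev (plog uplan1)).
Definition P1 := Eval vm_compute in buildP LOG1.
Definition rep1 := repf P1 64.
Definition run1 := runc (fun _ _ => Some tt) (fun _ => Some tt) tt (fun _ => None) RR1 rep1 LOG1.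
Definition M1 : st unit := Eval vm_compute in run1.
Definition tr1 (a : positive) (w : seq nat) : option positive :=
  omatch (trace (fun _ _ => Some tt) M1 a tt w) (fun dn => Some dn.1).
Definition ids1 : seq positive := [seq Pos.of_nat n | n <- iota 1 168].
Definition buildMT : trie (positive * trie (positive * positive)) :=
  foldl (fun m a => tset m a (a, foldl (fun r b => match tr1 a (rep1 b) with
      Some c => tset r b (b, c) | None => r end) TLeaf ids1)) TLeaf ids1.
Definition buildIT : trie (positive * positive) :=
  foldl (fun m a => match tr1 xH (wrev (rep1 a)) with Some c => tset m a (a, c) | None => m end) TLeaf ids1.
Definition MT := Eval vm_compute in buildMT.
Definition IT := Eval vm_compute in buildIT.
Definition cmul2 (a b : positive) : option positive :=
  match tget MT a with
  | Some (a', row) => if Pos.eqb a' a then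
      match tget row b with Some (b', c) => if Pos.eqb b' b then Some c else None | None => None end
      else None
  | None => None end.
Definition cinv2 (a : positive) : option positive :=
  match tget IT a with Some (a', c) => if Pos.eqb a' a then Some c else None | None => None end.
Definition cgen2 (col : nat) : option positive :=
  omatch (lookF (fun _ _ => Some tt) M1 xH col) (fun dn => Some dn.1).
Definition uplan2 := plan cmul2 cinv2 xH cgen2 RR2 (fun _ => [::]) false 6 (mkbyc RR2) [:: 0; 2] 4000000.
Definition LOG2 := Eval vm_compute in chunk (rev (plog uplan2)).

Definition P2 := Eval vm_compute in buildP LOG2.
Definition rep2 := repf P2 64.
Definition run2 := runc cmul2 cinv2 xH cgen2 RR2 rep2 LOG2.




Section GroupLemmas.
Variable G : group.
Implicit Types a b c x y : G.
Lemma mulgV a : gmul a (ginv a) = gone G.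
Proof.
set b := gmul a (ginv a).
have e : gmul b b = b by rewrite /b -gmulA [gmul (ginv a) _]gmulA gmulV gmul1.
have : b = gmul (ginv b) (gmul b b) by rewrite gmulA gmulV gmul1.
by rewrite e gmulV.
Qed.
Lemma mulg1 a : gmul a (gone G) = a.
Proof. by rewrite -(gmulV a) gmulA mulgV gmul1. Qed.
Lemma mulKg a b : gmul (ginv a) (gmul a b) = b.
Proof. by rewrite gmulA gmulV gmul1. Qed.
Lemma mulKVg a b : gmul a (gmul (ginv a) b) = b.
Proof. by rewrite gmulA mulgV gmul1. Qed.
Lemma mulg_l a b c : gmul a b = gmul a c -> b = c.
Proof. by move=> e; rewrite -(mulKg a b) e mulKg. Qed.
Lemma invg_uniq a b : gmul a b = gone G -> b = ginv a.
Proof. by move=> e; apply: (@mulg_l a); rewrite e mulgV. Qed.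
Lemma invgK a : ginv (ginv a) = a.
Proof. by apply/esym/invg_uniq; rewrite gmulV. Qed.
Lemma invMg a b : ginv (gmul a b) = gmul (ginv b) (ginv a).
Proof. by apply/esym/invg_uniq; rewrite -gmulA [gmul b _]gmulA mulgV gmul1 mulgV. Qed.
Lemma invg1 : ginv (gone G) = gone G.
Proof. by apply/esym/invg_uniq; rewrite gmul1. Qed.
Lemma mulg_solve a x y : gmul a x = y -> x = gmul (ginv a) y.
Proof. by move=> <-; rewrite mulKg. Qed.
Lemma mulg_swap a b : gmul a b = gone G -> gmul b a = gone G.
Proof. by move/invg_uniq->; rewrite gmulV. Qed.
End GroupLemmas.

Section Ev.
Variable G : group.
Variable gens : nat -> G.
Definition evc (c : nat) : G := let g := gens c./2 in if odd c then ginv g else g.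
Definition ev (w : seq nat) : G := foldr (fun c acc => gmul (evc c) acc) (gone G) w.

Lemma ev_nil : ev [::] = gone G. Proof. by []. Qed.
Lemma ev_cat u v : ev (u ++ v) = gmul (ev u) (ev v).
Proof. by elim: u => [|c u IH] /=; rewrite ?gmul1 // IH gmulA. Qed.
Lemma ev1 c : ev [:: c] = evc c.
Proof. by rewrite /= mulg1. Qed.
Lemma ev_rcons w c : ev (rcons w c) = gmul (ev w) (evc c).
Proof. by rewrite -cats1 ev_cat ev1. Qed.
Lemma evc_li c : evc (li c) = ginv (evc c).
Proof.
rewrite /evc /li -(odd_double_half c); move: (odd c) (c./2) => b m.
case: b => /=; rewrite ?add0n ?add1n /= ?odd_double ?half_double ?uphalf_double ?invgK //=.
by rewrite odd_double /= uphalf_double.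
Qed.
Lemma ev_wrev w : ev (wrev w) = ginv (ev w).
Proof.
elim: w => [|c w IH]; first by rewrite /= invg1.
by rewrite /wrev /= rev_cons ev_rcons -/(wrev w) IH evc_li invMg.
Qed.
Lemma ev_rot k w : ev w = gone G -> ev (rot k w) = gone G.
Proof.
by rewrite -{1}(cat_take_drop k w) ev_cat /rot ev_cat => /mulg_swap.
Qed.
End Ev.

Section Sound.
Variable G : group.
Variable gens : nat -> G.
Variables (C : Type) (interp : C -> G) (cmul : C -> C -> option C) (cinv : C -> option C)
  (cone : C) (cgen : nat -> option C) (rels : seq (seq nat)) (rep : positive -> seq nat).
Hypothesis Hmul : forall a b c, cmul a b = Some c -> interp c = gmul (interp a) (interp b).
Hypothesis Hinv : forall a c, cinv a = Some c -> interp c = ginv (interp a).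
Hypothesis Hone : interp cone = gone G.
Hypothesis Hgen : forall col n, cgen col = Some n -> interp n = evc gens col.
Hypothesis Hrel : forall i, ev gens (nth [::] rels i) = gone G.
Hypothesis Hrep0 : rep xH = [::].

Local Notation ev := (ev gens).
Local Notation evc := (evc gens).
Local Notation "a ** b" := (gmul a b) (at level 40, left associativity).

Definition validF (x : fact C) := let: (c, col, d, n) := x in
  ev (rep c) ** evc col = interp n ** ev (rep d).
Definition validQ (x : qfact C) := let: (a, b, n) := x in
  ev (rep a) = interp n ** ev (rep b).
Definition Inv (s : st C) :=
  (forall k x, tget (sF s) k = Some x -> validF x) /\
  (forall k x, tget (sQ s) k = Some x -> validQ x).

Lemma Inv0 : Inv (st0 C).
Proof. by split=> k x; rewrite /= tget_leaf. Qed.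

Lemma rawF_ok s c col d n : Inv s -> rawF s c col = Some (d, n) -> validF (c, col, d, n).
Proof.
case=> HF _; rewrite /rawF; case E: tget => [[[[c' col'] d'] n']|] //.
case: ifP => // /andP [/Pos.eqb_eq Hc /eqP Hcol] [<- <-].
by move: (HF _ _ E); rewrite Hc Hcol.
Qed.

Lemma rawQ_ok s a b n : Inv s -> rawQ s a = Some (b, n) -> validQ (a, b, n).
Proof.
case=> _ HQ; rewrite /rawQ; case E: tget => [[[a' b'] n']|] //.
case: ifP => // /Pos.eqb_eq Hc [<- <-].
by move: (HQ _ _ E); rewrite Hc.
Qed.

Lemma resolve_ok s X : Inv s -> forall fuel d n b m,
  X = interp n ** ev (rep d) -> resolve cmul s fuel d n = Some (b, m) ->
  X = interp m ** ev (rep b).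
Proof.
move=> Hs; elim=> [|f IH] d n b m HX /=; first by case=> <- <-.
case E: rawQ => [[b' m']|]; last by case=> <- <-.
case E2: cmul => [n'|] //= /IH; apply.
move: (rawQ_ok Hs E) => /= Hq.
by rewrite HX Hq gmulA (Hmul E2).
Qed.

Lemma lookF_ok s c col d n : Inv s -> lookF cmul s c col = Some (d, n) -> validF (c, col, d, n).
Proof.
move=> Hs; rewrite /lookF; case E: rawF => [[d' n']|] // H.
move: (rawF_ok Hs E) => /= Hf.
exact: (resolve_ok Hs Hf H).
Qed.

Lemma lookQ_ok s a b n : Inv s -> lookQ cmul s a = Some (b, n) -> validQ (a, b, n).
Proof.
move=> Hs; rewrite /lookQ; case E: rawQ => [[b' n']|] // H.
move: (rawQ_ok Hs E) => /= Hq.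
exact: (resolve_ok Hs Hq H).
Qed.

Lemma trace_ok s : Inv s -> forall w c a d a', trace cmul s c a w = Some (d, a') ->
  interp a ** ev (rep c) ** ev w = interp a' ** ev (rep d).
Proof.
move=> Hs; elim=> [|col w IH] c a d a' /=; first by case=> <- <-; rewrite mulg1.
case E: lookF => [[d1 n1]|] //=.
case E2: cmul => [a1|] //= /IH <-.
move: (lookF_ok Hs E) => /= Hf.
by rewrite (Hmul E2) -!gmulA [ev (rep c) ** _]gmulA Hf -!gmulA.
Qed.

Lemma addF_ok s x : Inv s -> validF x -> Inv (addF s x).
Proof.
case=> HF HQ Hx; case: x Hx => [[[c col] d] n] Hx; split=> k y /=.
- by move=> H; case: (tget_set H) => [->|H']; [exact: Hx | exact: HF H'].
- exact: HQ.
Qed.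

Lemma addQ_ok s a b n : Inv s -> validQ (a, b, n) -> Inv (addQ s a b n).
Proof.
case=> HF HQ Hx; split=> k y /=.
- exact: HF.
- by move=> H; case: (tget_set H) => [->|H']; [exact: Hx | exact: HQ H'].
Qed.

Lemma validF_inv c col d n ni : validF (c, col, d, n) -> interp ni = ginv (interp n) ->
  validF (d, li col, c, ni).
Proof.
move=> /= H Hni; rewrite Hni evc_li.
apply: (@mulg_l _ (interp n)); rewrite gmulA -H -gmulA mulgV mulg1.
by rewrite mulKVg.
Qed.

Lemma addF2_ok s c col d n ni : Inv s -> validF (c, col, d, n) ->
  interp ni = ginv (interp n) -> Inv (addF2 s c col d n ni).
Proof.
move=> Hs H Hni; apply: addF_ok; [exact: addF_ok Hs H | exact: validF_inv H Hni].
Qed.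

Lemma exec_ok s stp s' : Inv s -> exec cmul cinv cone cgen rels rep true s stp = Some s' -> Inv s'.
Proof.
move=> Hs; case: stp => [c col d|col|c ri i|c ri i dir|a col|a col dir] /=.
- case: ifP => // /eqP Hr [<-]; apply: addF2_ok => //=; last by rewrite Hone invg1.
  by rewrite Hr ev_rcons Hone gmul1.
- case E: cgen => [n|] //=; case E2: cinv => [ni|] //= [<-].
  apply: addF2_ok => //=; last exact: Hinv.
  by rewrite Hrep0 /= gmul1 mulg1 (Hgen E).
- set R := nth [::] rels ri; case: ifP => // Hi.
  case E1: trace => [[f a]|] //=; case E2: trace => [[b be]|] //=.
  case E3: cinv => [ai|] //=; case E4: cmul => [n|] //=; case E5: cinv => [ni|] //= [<-].
  apply: addF2_ok => //; last exact: Hinv.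
  rewrite /=.
  move: (trace_ok Hs E1) (trace_ok Hs E2); rewrite Hone !gmul1 ev_wrev => H1 H2.
  have HR := Hrel ri; rewrite -/R -(cat_take_drop i R) (drop_nth 0 Hi) ev_cat /= in HR.
  set A := ev (take i R) in H1 HR; set D := ev (drop i.+1 R) in H2 HR.
  set g := nth 0 R i in HR *.
  have HA : A ** evc g = ginv D by apply: invg_uniq; apply: mulg_swap; rewrite -gmulA.
  have Hf : ev (rep f) = ginv (interp a) ** (ev (rep c) ** A) by rewrite H1 mulKg.
  have -> : ev (rep f) ** evc g = ginv (interp a) ** (ev (rep c) ** ginv D).
    by rewrite Hf -HA !gmulA.
  by rewrite H2 (Hmul E4) (Hinv E3) gmulA.
- set R := nth [::] rels ri.
  case E1: trace => [[f a]|] //=; case E2: trace => [[b be]|] //=.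
  move: (trace_ok Hs E1) (trace_ok Hs E2); rewrite Hone !gmul1 ev_wrev => H1 H2.
  have HR := Hrel ri; rewrite -/R -(cat_take_drop i R) ev_cat in HR.
  have HU : ev (take i R) = ginv (ev (drop i R)) by apply: invg_uniq; apply: mulg_swap.
  have Hab : interp a ** ev (rep f) = interp be ** ev (rep b) by rewrite -H1 -H2 HU.
  case: dir.
  + case E3: cinv => [ai|] //=; case E4: cmul => [n|] //= [<-].
    apply: addQ_ok => //=; rewrite (Hmul E4) (Hinv E3) -gmulA -Hab.
    by rewrite mulKg.
  + case E3: cinv => [bi|] //=; case E4: cmul => [n|] //= [<-].
    apply: addQ_ok => //=; rewrite (Hmul E4) (Hinv E3) -gmulA Hab.
    by rewrite mulKg.
- case E1: lookQ => [[b n]|] //=; case E2: lookF => [[d m]|] //=.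
  case E3: cinv => [ni|] //=; case E4: cmul => [k|] //=; case E5: cinv => [ki|] //= [<-].
  apply: addF2_ok => //; last exact: Hinv.
  move: (lookQ_ok Hs E1) (lookF_ok Hs E2) => /= Hq Hf.
  rewrite (Hmul E4) (Hinv E3) -gmulA -Hf.
  by rewrite Hq -gmulA mulKg.
- case E1: lookQ => [[b n]|] //=; case E2: lookF => [[d m]|] //=.
  case E3: lookF => [[d2 m2]|] //=.
  case E4: cinv => [mi|] //=; case E5: cmul => [k1|] //=; case E6: cmul => [k|] //=.
  move: (lookQ_ok Hs E1) (lookF_ok Hs E2) (lookF_ok Hs E3) => /= Hq Hf Hf2.
  have Hd : ev (rep d) = interp k ** ev (rep d2).
    rewrite (Hmul E6) (Hmul E5) (Hinv E4) -!gmulA -Hf2.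
    by rewrite [interp n ** _]gmulA -Hq Hf mulKg.
  case: dir => [[<-]|].
  + exact: addQ_ok.
  + case E7: cinv => [ki|] //= [<-]; apply: addQ_ok => //=.
    by rewrite (Hinv E7) Hd mulKg.
Qed.

Lemma sexec_ok s stp : Inv s -> Inv (sexec cmul cinv cone cgen rels rep true s stp).
Proof. by move=> Hs; rewrite /sexec; case E: exec => [s'|] //; exact: exec_ok E. Qed.

Lemma runc_ok ls : Inv (runc cmul cinv cone cgen rels rep ls).
Proof.
rewrite /runc; elim: ls (st0 C) Inv0 => [|l ls IH] s Hs //=; apply: IH.
by elim: l s Hs => [|stp l IHl] s Hs //=; apply: IHl; exact: sexec_ok.
Qed.
End Sound.


Local Notation "a ** b" := (gmul a b) (at level 40, left associativity).

Definition gens3 (G : group) (x y t : G) (n : nat) : G :=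
  match n with 0 => x | 1 => y | _ => t end.

Fixpoint tall A (p : A -> bool) (m : trie A) : bool :=
  match m with
  | TLeaf => true
  | TNode l v r => [&& tall p l, (if v is Some x then p x else true) & tall p r]
  end.
Lemma tallP A (p : A -> bool) m k x : tall p m -> tget m k = Some x -> p x.
Proof.
elim: k m => [k IH|k IH|] [|l v r] //= /and3P [Hl Hv Hr]; [exact: IH|exact: IH|by move=> Ev; rewrite Ev in Hv].
Qed.

Lemma all_has_pos (p : positive -> bool) l a : all p l -> has (Pos.eqb a) l -> p a.
Proof.
elim: l => [|b l IH] //= /andP [pb pl] /orP [/Pos.eqb_eq ->|]; [done | exact: IH].
Qed.

Lemma allrot_ok (G : group) gens (rels : seq (seq nat)) :
  (forall R, R \in rels -> ev gens R = gone G) ->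
  forall i, ev gens (nth [::] (allrot rels) i) = gone G.
Proof.
move=> H i; case: (ltnP i (size (allrot rels))) => Hi; last by rewrite nth_default.
have : nth [::] (allrot rels) i \in allrot rels by exact: mem_nth.
move: (nth _ _ _) => w /flattenP [ws /mapP [R HR ->]] /flattenP [vs /mapP [u Hu ->]] /mapP [k _ ->].
apply: ev_rot; move: Hu; rewrite !inE => /orP [/eqP ->|/eqP ->]; first exact: H.
by rewrite ev_wrev H // invg1.
Qed.

Section Rels.
Variables (G : group) (x y t : G).
Local Notation gs := (gens3 x y t).
Lemma ev_pow w n : ev gs (wpow w n) = gexp (ev gs w) n.
Proof. by elim: n => //= n IH; rewrite ev_cat -/(wpow w n) IH. Qed.
Lemma ev_conj a g : ev gs (wconj a g) = gconj (ev gs a) (ev gs g).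
Proof. by rewrite /wconj !ev_cat ev_wrev /gconj gmulA. Qed.
Lemma ev_comm a b : ev gs (wcomm a b) = gcomm (ev gs a) (ev gs b).
Proof. by rewrite /wcomm !ev_cat !ev_wrev /gcomm !gmulA. Qed.
Lemma evX : ev gs X0 = x. Proof. by rewrite /X0 ev1. Qed.
Lemma evY : ev gs Y0 = y. Proof. by rewrite /Y0 ev1. Qed.
Lemma evT : ev gs T0 = t. Proof. by rewrite /T0 ev1. Qed.

Lemma rels2_ok : G_relations x y t -> forall R, R \in rels2 -> ev gs R = gone G.
Proof.
move=> [h1 [h2 [h3 [h4 [h5 [h6 [h7 [h8 [h9 h10]]]]]]]]] R.
rewrite /rels2 /rels1 cat_cons !inE => /orP [/eqP->|/orP [/eqP->|/orP [/eqP->|/orP [/eqP->|/orP [/eqP->|/orP [/eqP->|/orP [/eqP->|/orP [/eqP->|/orP [/eqP->|/eqP->]]]]]]]]];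
  by rewrite ?(ev_pow, ev_conj, ev_comm, ev_cat, ev_wrev, evX, evY, evT).
Qed.
Lemma rels1_ok : G_relations x y t -> forall R, R \in rels1 -> ev gs R = gone G.
Proof. by move=> HR R HR1; apply: rels2_ok => //; rewrite mem_cat HR1. Qed.
End Rels.

Lemma M1_eq : M1 = run1. Proof. vm_compute. reflexivity. Qed.
Lemma rep1_xH : rep1 xH = [::]. Proof. by vm_compute. Qed.
Lemma rep2_xH : rep2 xH = [::]. Proof. by vm_compute. Qed.

Definition umul : unit -> unit -> option unit := fun _ _ => Some tt.

Definition MT_check := tall (fun ar : positive * trie (positive * positive) => let: (a, row) := ar in
   tall (fun bc : positive * positive => let: (b, c) := bc in
     if tr1 a (rep1 b) is Some c' then Pos.eqb c' c else false) row) MT.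
Lemma MT_ok : MT_check = true. Proof. vm_compute. reflexivity. Qed.
Definition IT_check := tall (fun ac : positive * positive => let: (a, c) := ac in
     if tr1 xH (wrev (rep1 a)) is Some c' then Pos.eqb c' c else false) IT.
Lemma IT_ok : IT_check = true. Proof. vm_compute. reflexivity. Qed.

Section Inst.
Variables (G : group) (x y t : G).
Hypothesis HR : G_relations x y t.
Local Notation gs := (gens3 x y t).

Lemma Inv1 : Inv gs (fun _ : unit => gone G) rep1 M1.
Proof.
rewrite M1_eq; apply: runc_ok.
- by move=> *; rewrite gmul1.
- by move=> *; rewrite invg1.
- by [].
- by [].
- exact: allrot_ok (rels1_ok HR).
- exact: rep1_xH.
Qed.

Lemma umulP : forall a b c : unit, umul a b = Some c -> (fun _ : unit => gone G) c = gone G ** gone G.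
Proof. by move=> *; rewrite gmul1. Qed.

Lemma tr1_ok a w d : tr1 a w = Some d -> ev gs (rep1 a) ** ev gs w = ev gs (rep1 d).
Proof.
rewrite /tr1; case E: trace => [[d' []]|] // [<-].
by move: (trace_ok umulP Inv1 E); rewrite !gmul1.
Qed.

Definition interp2 (n : positive) : G := ev gs (rep1 n).

Lemma Hmul2 a b c : cmul2 a b = Some c -> interp2 c = interp2 a ** interp2 b.
Proof.
rewrite /cmul2; case E: (tget MT a) => [[a' row]|] //; case: ifP => // /Pos.eqb_eq Ea.
case E2: (tget row b) => [[b' c']|] //; case: ifP => // /Pos.eqb_eq Eb [<-].
have := tallP MT_ok E; rewrite /= => Hrow.
have := tallP Hrow E2; rewrite /=; case E3: tr1 => [c''|] // /Pos.eqb_eq Ec.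
by rewrite /interp2 -Ec -(tr1_ok E3) Ea Eb.
Qed.

Lemma Hinv2 a c : cinv2 a = Some c -> interp2 c = ginv (interp2 a).
Proof.
rewrite /cinv2; case E: (tget IT a) => [[a' c']|] //; case: ifP => // /Pos.eqb_eq Ea [<-].
have := tallP IT_ok E; rewrite /=; case E3: tr1 => [c''|] // /Pos.eqb_eq Ec.
by rewrite /interp2 -Ec -(tr1_ok E3) rep1_xH gmul1 ev_wrev Ea.
Qed.

Lemma Hone2 : interp2 xH = gone G.
Proof. by rewrite /interp2 rep1_xH. Qed.

Lemma Hgen2 col n : cgen2 col = Some n -> interp2 n = evc gs col.
Proof.
rewrite /cgen2; case E: lookF => [[d []]|] // [<-].
have H : ev gs (rep1 xH) ** evc gs col = gone G ** ev gs (rep1 d) := lookF_ok umulP Inv1 E.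
by move: H; rewrite /interp2 rep1_xH ev_nil !gmul1 => ->.
Qed.

Lemma Inv2 : Inv gs interp2 rep2 run2.
Proof.
apply: runc_ok.
- exact: Hmul2.
- exact: Hinv2.
- exact: Hone2.
- exact: Hgen2.
- exact: allrot_ok (rels2_ok HR).
- exact: rep2_xH.
Qed.

Lemma tr2_ok w d n : trace cmul2 run2 xH xH w = Some (d, n) -> d = xH ->
  ev gs w = interp2 n.
Proof.
move=> E Ed; move: (trace_ok Hmul2 Inv2 E); rewrite Ed rep2_xH Hone2 ev_nil !gmul1 => ->.
by rewrite mulg1.
Qed.
End Inst.

Definition conv_out (c : nat) : letter := (c./2 == 0, odd c).
Definition conv_in (l : letter) : nat := (if l.1 then 0 else 2) + l.2.
Definition act7 (w : seq nat) : nat := act_word 7 (map conv_out w).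

Definition check1 :=
  all (fun a => all (fun col =>
     if lookF umul M1 a col is Some (d, _) then
       has (Pos.eqb d) ids1 && (act7 (rep1 d) == act_letter (act7 (rep1 a)) (conv_out col))
     else false) (iota 0 4)) ids1 && has (Pos.eqb xH) ids1.
Lemma check1_ok : check1 = true. Proof. vm_compute. reflexivity. Qed.

Definition sp (p : nat) : positive := head xH [seq a <- ids1 | act7 (rep1 a) == p].
Definition tcw (a : positive) : seq nat := wrev (rep1 a) ++ [:: 4] ++ rep1 a.
Definition Wd p q r := tcw (sp p) ++ tcw (sp q) ++ tcw (sp r) ++ tcw (sp p) ++ tcw (sp q).

Definition check2 (m : st positive) :=
  all (fun a => if trace cmul2 m xH xH (tcw a ++ wrev (tcw (sp (act7 (rep1 a))))) is Some (d, n)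
                then Pos.eqb d xH && Pos.eqb n xH else false) ids1.
Definition check3 (m : st positive) :=
  all (fun p => all (fun q => all (fun r =>
    fano_collinear_distinct (bar p) (bar q) (bar r) ==>
    (if trace cmul2 m xH xH (Wd p q r) is Some (d, n)
     then Pos.eqb d xH && all (fun c => c < 4) (rep1 n) else false))
    (iota 1 14)) (iota 1 14)) (iota 1 14).
Definition check_all := let m := run2 in check2 m && check3 m.
Lemma check_all_ok : check_all = true. Proof. vm_compute. reflexivity. Qed.
Lemma check_all_E : check_all = check2 run2 && check3 run2. Proof. by []. Qed.


Lemma check2_spec m a : check2 m = true -> has (Pos.eqb a) ids1 ->
  (if trace cmul2 m xH xH (tcw a ++ wrev (tcw (sp (act7 (rep1 a))))) is Some (d, n)
   then Pos.eqb d xH && Pos.eqb n xH else false) = true.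
Proof. by move=> C Ha; apply: (all_has_pos C Ha). Qed.

Lemma check3_spec m p q r : check3 m = true -> p \in iota 1 14 -> q \in iota 1 14 -> r \in iota 1 14 ->
  fano_collinear_distinct (bar p) (bar q) (bar r) ->
  (if trace cmul2 m xH xH (Wd p q r) is Some (d, n)
     then Pos.eqb d xH && all (fun c => c < 4) (rep1 n) else false) = true.
Proof.
move=> C Hp Hq Hr Hf; move: C => /allP /(_ p Hp) /allP /(_ q Hq) /allP /(_ r Hr) /implyP.
exact.
Qed.

Section Final.
Variables (G : group) (x y t : G).
Hypothesis HR : G_relations x y t.
Local Notation gs := (gens3 x y t).

Lemma eval_letter_in l : eval_letter x y l = evc gs (conv_in l).
Proof. by case: l => [[] []]. Qed.
Lemma conv_out_in l : conv_out (conv_in l) = l.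
Proof. by case: l => [[] []]. Qed.

Lemma eval_word_rcons w l : eval_word x y (rcons w l) = eval_word x y w ** eval_letter x y l.
Proof. by rewrite /eval_word foldl_rcons. Qed.

Lemma L1 (gw : word) : exists a, [/\ has (Pos.eqb a) ids1,
  eval_word x y gw = ev gs (rep1 a) & act_word 7 gw = act7 (rep1 a)].
Proof.
elim/last_ind: gw => [|gw l [a [Ha Hev Hact]]].
  by exists xH; rewrite rep1_xH; split => //; move: check1_ok => /andP [].
move: check1_ok => /andP [/all_has_pos /(_ Ha)] /allP /(_ (conv_in l)).
have Hl : conv_in l \in iota 0 4 by case: l => [[] []].
move=> /(_ Hl); case E: lookF => [[d []]|] // /andP [Hd /eqP Hact'].
exists d; split => //.
  have H : ev gs (rep1 a) ** evc gs (conv_in l) = gone G ** ev gs (rep1 d) := lookF_ok (umulP G) (Inv1 HR) E.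
  by rewrite eval_word_rcons Hev eval_letter_in H gmul1.
by rewrite /act_word foldl_rcons -/(act_word 7 gw) Hact Hact' conv_out_in.
Qed.

Lemma t_idx_ev gw a : eval_word x y gw = ev gs (rep1 a) -> t_idx x y t gw = ev gs (tcw a).
Proof.
move=> H; rewrite /t_idx /gconj H /tcw !ev_cat ev_wrev ev1 gmulA.
by [].
Qed.

Lemma welldef a : has (Pos.eqb a) ids1 -> ev gs (tcw a) = ev gs (tcw (sp (act7 (rep1 a)))).
Proof.
move=> Ha; move: check_all_ok; rewrite check_all_E => /andP [C2 _].
move: (check2_spec C2 Ha); case E: (trace cmul2 run2 xH xH _) => [[d n]|]; last by [].
move=> /andP [/Pos.eqb_eq Ed /Pos.eqb_eq En].
move: (tr2_ok HR E Ed); rewrite En Hone2 ev_cat ev_wrev => H.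
have := invg_uniq H; rewrite -{2}(invgK (ev gs (tcw a))) => Hi.
by rewrite -Hi invgK.
Qed.

Lemma ev_tc gw i : act_word 7 gw = i -> t_idx x y t gw = ev gs (tcw (sp i)).
Proof.
case: (L1 gw) => a [Ha Hev Hact] Hi.
by rewrite (t_idx_ev Hev) (welldef Ha) -Hact Hi.
Qed.

Lemma ev5 (A B D : seq nat) :
  ev gs (A ++ B ++ D ++ A ++ B) = ev gs A ** ev gs B ** ev gs D ** ev gs A ** ev gs B.
Proof. by rewrite !ev_cat !gmulA. Qed.

Lemma foldl_out acc w : all (fun c => c < 4) w ->
  foldl (fun a l => a ** eval_letter x y l) acc (map conv_out w) = acc ** ev gs w.
Proof.
elim: w acc => [|c w IH] acc /=; first by rewrite ?ev_nil mulg1.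
case/andP => Hc Hw; rewrite IH //.
rewrite gmulA; congr (_ ** _ ** _).
by do 4 (case: c Hc => [|c] Hc //).
Qed.
Lemma eval_word_out w : all (fun c => c < 4) w -> eval_word x y (map conv_out w) = ev gs w.
Proof. by move=> Hw; rewrite /eval_word foldl_out // gmul1. Qed.
End Final.

Definition wit (p q r : nat) : word :=
  if trace cmul2 run2 xH xH (Wd p q r) is Some (_, n) then map conv_out (rep1 n) else [::].

Theorem theorem3p8 (i j k : nat) (gi gj gk : word) :
  (1 <= i <= 14)%N -> (1 <= j <= 14)%N -> (1 <= k <= 14)%N ->
  fano_collinear_distinct (bar i) (bar j) (bar k) ->
  act_word 7 gi = i -> act_word 7 gj = j -> act_word 7 gk = k ->
  exists w : word,
    forall (G : group) (x y t : G), G_relations x y t ->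
      eval_word x y w =
      gmul (gmul (gmul (gmul (t_idx x y t gi) (t_idx x y t gj))
                       (t_idx x y t gk)) (t_idx x y t gi)) (t_idx x y t gj).
Proof.
move=> Hi Hj Hk Hf Ai Aj Ak; exists (wit i j k) => G x y t HR.
have mi : forall m, (1 <= m <= 14)%N -> m \in iota 1 14.
  by move=> m Hm; rewrite mem_iota addnC addn1 ltnS.
move: check_all_ok; rewrite check_all_E => /andP [_ C3].
move: (check3_spec C3 (mi i Hi) (mi j Hj) (mi k Hk) Hf).
rewrite /wit; case E: (trace cmul2 run2 xH xH _) => [[d n]|]; last by [].
move=> /andP [/Pos.eqb_eq Ed Hn].
rewrite (eval_word_out x y t Hn); have := tr2_ok HR E Ed; rewrite /interp2 => <-.
rewrite (ev_tc HR Ai) (ev_tc HR Aj) (ev_tc HR Ak) /Wd.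
exact: ev5.
Qed.
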